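(* Let $n\ge 2$, let $P\neq[n,n-1,\ldots,1]$ be an arithmetically progressed permutation with ratio $k$, and let $\mathsf{T}_P$ be its associated ternary string. If $\mathsf{T}_P$ contains exactly two distinct characters, then $\mathsf{BWT}_{\mathsf{T}_P}$ consists of exactly $2$ runs; if $\mathsf{T}_P$ contains exactly three distinct characters, then $\mathsf{BWT}_{\mathsf{T}_P}$ consists of exactly $3$ runs.
   Context: A run of a string is a maximal block of consecutive equal characters. Alphabet $\{\mathtt{a}<\mathtt{b}<\mathtt{c}\}$, lexicographic order with a proper prefix smaller than the longer string; suffix array $\mathsf{SA}_{\mathsf{T}}$: permutation of $[1..n]$ such that $\mathsf{T}[\mathsf{SA}_{\mathsf{T}}[i]..n]$ is the $i$-th smallest suffix. $x\bmod n$ denotes the representative of $x$ modulo $n$ in $[1..n]$. An arithmetically progressed permutation of length $n$ with ratio $k\in[1..n-1]$ is a permutation $P=[p_1,\ldots,p_n]$ of $[1..n]$ with $p_{i+1}=p_i+k\bmod n$. Ternary string associated with $P$: cut $P$ immediately after the entry $n-k$ and immediately after the entry $(p_1-k-1)\bmod n$, giving consecutive possibly empty blocks $A,B,C$ with $P=ABC$; set $\mathsf{T}_P[p_i]=\mathtt{a},\mathtt{b},\mathtt{c}$ according as $p_i$ lies in $A$, $B$, $C$. BWT: $\mathsf{BWT}_{\mathsf{T}}[i]=\mathsf{T}[\mathsf{SA}_{\mathsf{T}}[i]-1\bmod n]$. *)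

(* Defs.v *)
(* Strings over {a<b<c} are encoded as seq nat
   with a = 0, b = 1, c = 2; positions are 1-based as in the paper. *)
From mathcomp Require Import all_boot.
Set Implicit Arguments. Unset Strict Implicit. Unset Printing Implicit Defensive.

Definition modr (x n : nat) : nat := if x %% n == 0 then n else x %% n.

Fixpoint lexle (s t : seq nat) : bool :=
  match s, t with
  | [::], _ => true
  | _ :: _, [::] => false
  | x :: s', y :: t' => (x < y) || ((x == y) && lexle s' t')
  end.

Definition charAt (T : seq nat) (i : nat) : nat := nth 0 T i.-1.

Definition suffix (T : seq nat) (i : nat) : seq nat := drop i.-1 T.

Definition SA (T : seq nat) : seq nat :=
  sort (fun i j => lexle (suffix T i) (suffix T j)) (iota 1 (size T)).

Definition BWT (T : seq nat) : seq nat :=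
  [seq charAt T (modr (i - 1) (size T)) | i <- SA T].

Definition runs (s : seq nat) : nat :=
  count (fun i => (i == 0) || (nth 0 s i != nth 0 s i.-1)) (iota 0 (size s)).

Definition AP_perm (n k : nat) (P : seq nat) : Prop :=
  [/\ 1 <= k <= n - 1, perm_eq P (iota 1 n) &
      forall i, i.+1 < n -> nth 0 P i.+1 = modr (nth 0 P i + k) n].

(* the ternary string associated with P (ratio k), P = A B C;
   the two cut points are taken in the order they occur in P *)
Definition ternary (n k : nat) (P : seq nat) : seq nat :=
  let i1 := index (n - k) P in
  let i2 := index (modr (head 0 P + (n - k) - 1) n) P in
  let c1 := (minn i1 i2).+1 in
  let c2 := (maxn i1 i2).+1 in
  [seq (let j := index p P in if j < c1 then 0 else if j < c2 then 1 else 2)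
  | p <- iota 1 n].

(* Main.v *)
Require Import Defs.
From mathcomp Require Import all_boot.
From mathcomp Require Import zify.
Set Implicit Arguments. Unset Strict Implicit. Unset Printing Implicit Defensive.

Lemma lexle_total s t : lexle s t || lexle t s.
Proof.
elim: s t => [|x s IH] [|y t] //=.
case: (ltngtP x y) => //= ->; rewrite eqxx /=; exact: IH.
Qed.

Lemma lexle_trans s t u : lexle s t -> lexle t u -> lexle s u.
Proof.
elim: s t u => [|x s IH] [|y t] [|z u] //=.
case/orP=> [lxy|/andP[/eqP-> H1]]; case/orP=> [lyz|/andP[/eqP<- H2]].
- by rewrite (ltn_trans lxy lyz).
- by rewrite lxy.
- by rewrite lyz.
- by rewrite eqxx (IH _ _ H1 H2) orbT.
Qed.

Lemma lexle_anti s t : lexle s t -> lexle t s -> s = t.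
Proof.
elim: s t => [|x s IH] [|y t] //=.
case/orP=> [lxy|/andP[/eqP-> H1]]; case/orP=> [lyx|/andP[/eqP He H2]].
- by have := ltn_trans lxy lyx; rewrite ltnn.
- by move: lxy; rewrite He ltnn.
- by move: lyx; rewrite ltnn.
- by rewrite (IH _ H1 H2).
Qed.

Lemma modrE x k n : 1 <= x <= n -> k < n ->
  modr (x + k) n = if x + k <= n then x + k else x + k - n.
Proof.
move=> /andP[x1 xn] kn; rewrite /modr.
case: (ltngtP (x + k) n) => h.
- rewrite modn_small // ifN; last lia.
  done.
- have -> : x + k = (x + k - n) + n by rewrite subnK // ltnW.
  rewrite modnDr modn_small; last lia.
  case: eqP => h0; lia.
- by rewrite h modnn eqxx.
Qed.


Fixpoint adjc (x : nat) (s : seq nat) : nat :=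
  if s is y :: s' then (y != x) + adjc y s' else 0.

Lemma adjc_count x s :
  count (fun i => nth 0 s i != nth 0 (x :: s) i) (iota 0 (size s)) = adjc x s.
Proof.
elim: s x => [|y s IH] x //=.
rewrite -(IH y); congr (_ + _).
rewrite -[1]addn0 iotaDl count_map; apply: eq_count => i /=.
by rewrite add0n.
Qed.

Lemma runs_cons x s : runs (x :: s) = (adjc x s).+1.
Proof.
rewrite /runs /= add1n; congr _.+1.
rewrite -[1]addn0 iotaDl count_map -adjc_count; apply: eq_count => i /=.
by rewrite add0n.
Qed.

Lemma adjc_nseq x a t : adjc x (nseq a x ++ t) = adjc x t.
Proof. by elim: a => //= a ->; rewrite eqxx. Qed.

Lemma adjc_nseq0 x a : adjc x (nseq a x) = 0.
Proof. by have := adjc_nseq x a [::]; rewrite cats0. Qed.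

Lemma runs3 a b c x y z : 0 < a -> x != y -> y != z -> z != x ->
  runs (nseq a x ++ nseq b y ++ nseq c z) = 1 + (0 < b) + (0 < c).
Proof.
case: a => // a _ xy yz zx.
have yx : y != x by rewrite eq_sym.
have zy : z != y by rewrite eq_sym.
rewrite /= runs_cons adjc_nseq.
case: b => [|b]; case: c => [|c] /=; rewrite ?cats0 ?adjc_nseq //=;
  rewrite ?adjc_nseq ?adjc_nseq0 ?yx ?zy ?zx //=.
Qed.

Lemma runs3g a b c x y z : x != y -> y != z -> z != x ->
  runs (nseq a x ++ nseq b y ++ nseq c z) = (0 < a) + (0 < b) + (0 < c).
Proof.
move=> xy yz zx; case: a => [|a]; last by rewrite runs3.
have zy : z != y by rewrite eq_sym.
case: b => [|b]; case: c => [|c] //=; rewrite ?runs_cons ?adjc_nseq ?adjc_nseq0 //=.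
by rewrite zy adjc_nseq0.
Qed.


Lemma undup_eqmem (s t : seq nat) : s =i t -> size (undup s) = size (undup t).
Proof.
move=> st; apply: perm_size; apply: uniq_perm; rewrite ?undup_uniq // => v.
by rewrite !mem_undup st.
Qed.

Lemma undup3 a b c (x y z : nat) : x != y -> y != z -> z != x ->
  size (undup (nseq a x ++ nseq b y ++ nseq c z)) = (0 < a) + (0 < b) + (0 < c).
Proof.
move=> xy yz zx.
have yx : y != x by rewrite eq_sym.
have zy : z != y by rewrite eq_sym.
have xz : x != z by rewrite eq_sym.
set s := _ ++ _.
set t := (if 0 < a then [:: x] else [::]) ++ (if 0 < b then [:: y] else [::])
          ++ (if 0 < c then [:: z] else [::]).
have -> : size (undup s) = size (undup t).
  apply: undup_eqmem => v; rewrite /s /t !mem_cat !mem_nseq.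
  clear s t; by case: a; case: b; case: c => * /=; rewrite ?inE ?orbF.
rewrite /t; clear s t; case: a; case: b; case: c => * /=; by rewrite ?inE ?(negbTE xy) ?(negbTE yz) ?(negbTE xz).
Qed.


Definition Fc (c1 c2 j : nat) := if j < c1 then 0 else if j < c2 then 1 else 2.

Lemma Fc_mono c1 c2 i j : i <= j -> Fc c1 c2 i <= Fc c1 c2 j.
Proof. rewrite /Fc => ij; (repeat case: ifP => ?); lia. Qed.

Lemma Fc_cut c1 c2 i : Fc c1 c2 i = Fc c1 c2 i.+1 -> c1 <= c2 -> i.+1 != c1 /\ i.+1 != c2.
Proof. rewrite /Fc => + h; (repeat case: ifP => ?); lia. Qed.

Lemma Fc_nseq c1 c2 a b v : (forall j, a <= j < a + b -> Fc c1 c2 j = v) ->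
  map (Fc c1 c2) (iota a b) = nseq b v.
Proof.
move=> H; transitivity (map (fun=> v) (iota a b)).
  by apply/eq_in_map => j; rewrite mem_iota => /H.
by elim: b a {H} => //= b IH a; rewrite IH.
Qed.


Lemma AP_basic n k P : 2 <= n -> AP_perm n k P ->
  [/\ size P = n, uniq P, forall p, (p \in P) = (0 < p <= n),
      forall i, i < n -> index (nth 0 P i) P = i &
      forall i, i < n -> 0 < nth 0 P i <= n].
Proof.
move=> hn [_ pP _].
have sP : size P = n by rewrite (perm_size pP) size_iota.
have uP : uniq P by rewrite (perm_uniq pP) iota_uniq.
have mP : forall p, (p \in P) = (0 < p <= n).
  by move=> p; rewrite (perm_mem pP) mem_iota; lia.
split=> // i hi; first by rewrite index_uniq // sP.
by rewrite -mP mem_nth // sP.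
Qed.

Lemma modr_range x k n : 1 <= x <= n -> k < n -> 1 <= modr (x + k) n <= n.
Proof. move=> hx hk; rewrite modrE //; case: ifP; lia. Qed.

Lemma modr_inj x y k n : 1 <= x <= n -> 1 <= y <= n -> k < n ->
  modr (x + k) n = modr (y + k) n -> x = y.
Proof. move=> hx hy hk; rewrite !modrE //; (repeat case: ifP => ?); lia. Qed.

Lemma AP_succ n k P : 2 <= n -> AP_perm n k P ->
  forall i, i.+1 < n -> modr (nth 0 P i + k) n = nth 0 P i.+1.
Proof. by move=> _ [_ _ rec] i /rec. Qed.

Lemma AP_k n k P : 2 <= n -> AP_perm n k P -> 0 < k < n.
Proof. move=> hn [/andP[h1 h2] _ _]; lia. Qed.

Lemma AP_wrap n k P : 2 <= n -> AP_perm n k P ->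
  modr (nth 0 P n.-1 + k) n = nth 0 P 0.
Proof.
move=> hn hAP; have [sP uP mP iP rP] := AP_basic hn hAP.
have /andP[k0 kn] := AP_k hn hAP.
have rec := AP_succ hn hAP.
set v := modr _ n.
have hv : v \in P by rewrite mP; apply: modr_range => //; apply: rP; lia.
have jn : index v P < n by rewrite -sP index_mem.
have ev : nth 0 P (index v P) = v by rewrite nth_index.
case ej: (index v P) => [|j]; first by rewrite -ev ej.
rewrite ej -rec in ev; last by rewrite -ej.
move/modr_inj: ev => ev.
rewrite ej in jn.
have := ev (rP j (ltac:(lia))) (rP n.-1 (ltac:(lia))) kn.
move/(congr1 (index^~ P)); rewrite !iP; lia.
Qed.

Definition i1 n k P := index (n - k) P.
Definition i2 n k P := index (modr (head 0 P + (n - k) - 1) n) P.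
Definition c1 n k P := (minn (i1 n k P) (i2 n k P)).+1.
Definition c2 n k P := (maxn (i1 n k P) (i2 n k P)).+1.

Lemma ternaryE n k P :
  ternary n k P = [seq Fc (c1 n k P) (c2 n k P) (index p P) | p <- iota 1 n].
Proof. by []. Qed.

Lemma size_ternary n k P : size (ternary n k P) = n.
Proof. by rewrite size_map size_iota. Qed.

Lemma ternary_nth n k P q : 1 <= q <= n ->
  nth 0 (ternary n k P) q.-1 = Fc (c1 n k P) (c2 n k P) (index q P).
Proof.
move=> hq; rewrite ternaryE (nth_map 0) ?size_iota; last lia.
rewrite nth_iota; last lia.
by congr Fc; congr index; lia.
Qed.

Lemma suffix_cons (T : seq nat) x : 1 <= x <= size T ->
  Defs.suffix T x = nth 0 T x.-1 :: Defs.suffix T x.+1.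
Proof.
move=> hx; rewrite /Defs.suffix (drop_nth 0); last lia.
rewrite prednK; [by [] | lia].
Qed.

Lemma key n k P : 2 <= n -> AP_perm n k P -> forall x, 1 <= x <= n ->
  index x P != n.-1 ->
  lexle (Defs.suffix (ternary n k P) x) (Defs.suffix (ternary n k P) (modr (x + k) n)).
Proof.
move=> hn hAP; have [sP uP mP iP rP] := AP_basic hn hAP.
have /andP[k0 kn] := AP_k hn hAP.
have rec := AP_succ hn hAP; have wrap := AP_wrap hn hAP.
have hc : c1 n k P <= c2 n k P by rewrite /c1 /c2; lia.
have ic1 : (i1 n k P).+1 = c1 n k P \/ (i1 n k P).+1 = c2 n k P by rewrite /c1 /c2; lia.
have ic2 : (i2 n k P).+1 = c1 n k P \/ (i2 n k P).+1 = c2 n k P by rewrite /c1 /c2; lia.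
have sT : size (ternary n k P) = n := size_ternary n k P.
move=> x; have [d] := ubnP (n - x); elim: d x => // d IH x hd hx hix.
have xP : x \in P by rewrite mP.
have ixn : index x P < n by rewrite -sP index_mem.
have ex : nth 0 P (index x P) = x by rewrite nth_index.
have yv : modr (x + k) n = if x + k <= n then x + k else x + k - n by rewrite modrE.
set y := modr (x + k) n in yv *.
have ey : y = nth 0 P (index x P).+1.
  rewrite /y -rec; [by rewrite ex | lia].
have hy : 1 <= y <= n by rewrite yv; case: ifP; lia.
have iy : index y P = (index x P).+1 by rewrite ey iP; lia.
rewrite (@suffix_cons _ x) ?sT // (@suffix_cons _ y) ?sT //.
rewrite !ternary_nth // iy /=.
have := Fc_mono (c1 n k P) (c2 n k P) (leqnSn (index x P)).
rewrite leq_eqVlt; case/orP=> [/eqP heq|->//].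
rewrite heq eqxx ltnn /=.
have [cut1 cut2] := Fc_cut heq hc.
case: (ltngtP x n) => xn; first last.
- by rewrite xn /Defs.suffix drop_oversize //= sT.
- lia.
have yn : y < n.
  rewrite ltn_neqAle; apply/andP; split; last by case/andP: hy.
  apply/eqP => yn.
  have xe : x = n - k by move: yn; rewrite yv; case: ifP; lia.
  have : index x P = i1 n k P by rewrite xe.
  move=> h; rewrite h in cut1 cut2; lia.
have ey1 : modr (x.+1 + k) n = y.+1.
  rewrite modrE; last by []; last lia.
  move: yn; rewrite yv; (repeat case: ifP => ?); lia.
have hix1 : index x.+1 P != n.-1.
  apply/eqP => h.
  have e1 : nth 0 P n.-1 = x.+1 by rewrite -h nth_index // mP; lia.
  have := wrap; rewrite e1 ey1 => hp1.
  have hdP : head 0 P = y.+1 by rewrite hp1; case: (P).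
  have : index x P = i2 n k P.
    rewrite /i2 hdP.
    have -> : y.+1 + (n - k) - 1 = y + (n - k) by lia.
    rewrite modrE //; last lia.
    congr index; move: hy; rewrite yv; case: (leqP (x + k) n) => ? /=; case: ifP; lia.
  move=> h2; rewrite h2 in cut1 cut2; lia.
rewrite -ey1; apply: IH => //; lia.
Qed.

Lemma SA_P n k P : 2 <= n -> AP_perm n k P -> SA (ternary n k P) = P.
Proof.
move=> hn hAP; have [sP uP mP iP rP] := AP_basic hn hAP.
have rec := AP_succ hn hAP.
have [_ pP _] := hAP.
rewrite /SA size_ternary.
set T := ternary n k P.
set leT := fun i j => lexle (Defs.suffix T i) (Defs.suffix T j).
have tr : transitive leT by move=> j i l; exact: lexle_trans.
rewrite (_ : sort leT (iota 1 n) = sort leT P).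
  apply: sorted_sort => //; apply/(sortedP 0) => i; rewrite sP => hi.
  rewrite /leT -rec //; apply: key => //; first by apply: rP; lia.
  by rewrite iP; lia.
apply/perm_sort_inP; rewrite 1?perm_sym //.
- by move=> i j _ _; exact: lexle_total.
- by move=> j i l _ _ _; exact: lexle_trans.
- move=> i j; rewrite !mem_iota => hi hj /andP[h1 h2].
  have := congr1 size (lexle_anti h1 h2).
  by rewrite /Defs.suffix !size_drop /T size_ternary; lia.
Qed.

Lemma modr_spec x n : 0 < n -> x < n + n ->
  [\/ x = 0 /\ modr x n = n, 0 < x <= n /\ modr x n = x
    | n < x /\ modr x n = x - n].
Proof.
move=> n0 xn; rewrite /modr.
case: (ltngtP x n) => h.
- case: (posnP x) => [->|x0]; first by rewrite mod0n eqxx; constructor 1.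
  by rewrite modn_small // ifN; [constructor 2; lia | lia].
- have -> : x %% n = x - n.
    have {1}-> : x = (x - n) + n by lia.
    by rewrite modnDr modn_small //; lia.
  rewrite ifN; [constructor 3; lia | lia].
- by rewrite h modnn eqxx; constructor 2; lia.
Qed.

Arguments modr_spec : clear implicits.

Lemma BWT_idx n k P : 2 <= n -> AP_perm n k P ->
  let s := (i2 n k P).+1 in
  s < n /\ forall j, j < n ->
  index (modr (nth 0 P j - 1) n) P = if j + s < n then j + s else j + s - n.
Proof.
move=> hn hAP s; have [sP uP mP iP rP] := AP_basic hn hAP.
have /andP[k0 kn] := AP_k hn hAP.
have rec := AP_succ hn hAP; have wrap := AP_wrap hn hAP.
have n0 : 0 < n by lia.
set p1 := nth 0 P 0.
have hp1 : 0 < p1 <= n by apply: rP; lia.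
set w := modr (head 0 P + (n - k) - 1) n.
have hw : w = modr (p1 + (n - k) - 1) n by rewrite /w /p1; case: (P).
have wP : w \in P.
  rewrite mP hw; have [[? ->]|[? ->]|[? ->]] := modr_spec (p1 + (n - k) - 1) n n0 ltac:(lia);
  lia.
have i2n : i2 n k P < n by rewrite /i2 -/w -sP index_mem.
have ew : nth 0 P (i2 n k P) = w by rewrite /i2 nth_index.
have i2n1 : i2 n k P != n.-1.
  apply/eqP => h; move: wrap; rewrite -h ew hw -/p1.
  have [[? E]|[? E]|[? E]] := modr_spec (p1 + (n - k) - 1) n n0 ltac:(lia); rewrite E;
  have [[? E']|[? E']|[? E']] := modr_spec (modr (p1 + (n - k) - 1) n + k) n n0 ltac:(lia);
  rewrite E in E'; rewrite E'; lia.
have sn : s < n by rewrite /s; lia.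
split=> // j; elim: j => [|j IH] hj.
- rewrite add0n ifT // /s.
  rewrite -[RHS](iP (i2 n k P).+1) // -rec; last lia.
  rewrite ew hw; congr index.
  have [[? E]|[? E]|[? E]] := modr_spec (p1 + (n - k) - 1) n n0 ltac:(lia); rewrite E;
  have [[? E']|[? E']|[? E']] := modr_spec (modr (p1 + (n - k) - 1) n + k) n n0 ltac:(lia);
  rewrite E in E'; rewrite E';
  have [[? E'']|[? E'']|[? E'']] := modr_spec (p1 - 1) n n0 ltac:(lia); rewrite E''; lia.
- have IH' := IH (ltnW hj).
  set q := modr (nth 0 P j - 1) n in IH'.
  have hpj : 0 < nth 0 P j <= n by apply: rP; lia.
  have -> : modr (nth 0 P j.+1 - 1) n = modr (q + k) n.
    rewrite -rec // /q.
    have [[? E]|[? E]|[? E]] := modr_spec (nth 0 P j - 1) n n0 ltac:(lia); rewrite E;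
    have [[? E']|[? E']|[? E']] := modr_spec (nth 0 P j + k) n n0 ltac:(lia); rewrite E';
    have [[? E'']|[? E'']|[? E'']] := modr_spec (modr (nth 0 P j + k) n - 1) n n0 ltac:(lia);
    rewrite E' in E''; rewrite E''; try lia;
    have [[? F]|[? F]|[? F]] := modr_spec (modr (nth 0 P j - 1) n + k) n n0 ltac:(lia);
    rewrite E in F; rewrite F; lia.
  have qP : q \in P.
    rewrite mP /q; have [[? ->]|[? ->]|[? ->]] := modr_spec (nth 0 P j - 1) n n0 ltac:(lia); lia.
  have eq : nth 0 P (index q P) = q by rewrite nth_index.
  have iqn : index q P < n by rewrite -sP index_mem.
  case: (ltngtP (index q P) n.-1) => hq.
  + rewrite -eq rec; last lia.
    rewrite iP; last lia.
    move: hq; rewrite IH'; (repeat case: ifP => ?); lia.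
  + lia.
  + rewrite -eq hq wrap iP //.
    move: hq; rewrite IH'; (repeat case: ifP => ?); lia.
Qed.

Lemma BWT_form n k P : 2 <= n -> AP_perm n k P ->
  let s := (i2 n k P).+1 in
  BWT (ternary n k P) =
  map (Fc (c1 n k P) (c2 n k P)) (iota s (n - s)) ++
  map (Fc (c1 n k P) (c2 n k P)) (iota 0 s).
Proof.
move=> hn hAP s; have [sP uP mP iP rP] := AP_basic hn hAP.
have [sn hidx] := BWT_idx hn hAP.
rewrite -/s in sn hidx.
have n0 : 0 < n by lia.
set F := Fc _ _.
transitivity [seq F (if j + s < n then j + s else j + s - n) | j <- iota 0 n].
  rewrite /BWT SA_P // size_ternary.
  set T := ternary n k P.
  rewrite -[in LHS](mkseq_nth 0 P) sP /mkseq -map_comp.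
  apply/eq_in_map => j; rewrite mem_iota => /andP[_ hj] /=.
  have hpj : 0 < nth 0 P j <= n by apply: rP; lia.
  rewrite /charAt ternary_nth ?hidx //.
  have [[? ->]|[? ->]|[? ->]] := modr_spec (nth 0 P j - 1) n n0 ltac:(lia); lia.
have -> : iota 0 n = iota 0 (n - s) ++ iota (0 + (n - s)) s.
  by rewrite -iotaD subnK // ltnW.
rewrite map_cat; congr (_ ++ _).
  have -> : iota s (n - s) = map (addn s) (iota 0 (n - s)) by rewrite -iotaDl addn0.
  rewrite -map_comp; apply/eq_in_map => j.
  by rewrite mem_iota => /andP[_ hj] /=; rewrite ifT; [congr F; lia | lia].
have -> : iota (0 + (n - s)) s = map (addn (n - s)) (iota 0 s) by rewrite -iotaDl addn0.
rewrite -map_comp; apply/eq_in_map => j; rewrite mem_iota => /andP[_ hj] /=.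
by rewrite ifN; [congr F; lia | lia].
Qed.

Lemma runs_undup n k P : 2 <= n -> AP_perm n k P ->
  runs (BWT (ternary n k P)) = size (undup (ternary n k P)).
Proof.
move=> hn hAP; have [sP uP mP iP rP] := AP_basic hn hAP.
have [sn _] := BWT_idx hn hAP.
have [_ pP _] := hAP.
rewrite (BWT_form hn hAP).
set s := (i2 n k P).+1 in sn *.
set F := Fc _ _.
have idxP : map (index^~ P) P = iota 0 n.
  rewrite -[X in map _ X](mkseq_nth 0 P) sP /mkseq -map_comp -[RHS]map_id.
  by apply/eq_in_map => j; rewrite mem_iota => /andP[_ hj] /=; rewrite iP.
have pT : perm_eq (ternary n k P) (map F (iota 0 n)).
  rewrite ternaryE -/F (map_comp F (index^~ P)) -idxP.
  by apply: perm_map; apply: perm_map; rewrite perm_sym.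
have pB : perm_eq (map F (iota s (n - s)) ++ map F (iota 0 s)) (map F (iota 0 n)).
  rewrite -map_cat; apply: perm_map.
  have -> : iota 0 n = iota 0 s ++ iota (0 + s) (n - s) by rewrite -iotaD subnKC // ltnW.
  by rewrite perm_catC.
rewrite (undup_eqmem (perm_mem pT)) -(undup_eqmem (perm_mem pB)).
have hc0 : 0 < c1 n k P by [].
rewrite /F /s; clear F pT pB.
case: (leqP (i2 n k P) (i1 n k P)) => h.
- have ec1 : (i2 n k P).+1 = c1 n k P by rewrite /c1; lia.
  have hc2 : c2 n k P = (i1 n k P).+1 by rewrite /c2; lia.
  have sn' : c1 n k P < n by rewrite -ec1.
  rewrite ec1.
  have hcn : c2 n k P <= n.
    rewrite hc2 /i1 -sP index_mem mP; have := AP_k hn hAP; lia.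
  have -> : n - c1 n k P = (c2 n k P - c1 n k P) + (n - c2 n k P) by rewrite /c1; lia.
  rewrite iotaD map_cat.
  rewrite (@Fc_nseq _ _ _ _ 1); last by move=> j hj; rewrite /Fc; (repeat case: ifP => ?); lia.
  rewrite (@Fc_nseq _ _ _ _ 2); last by move=> j hj; rewrite /Fc; (repeat case: ifP => ?); lia.
  rewrite (@Fc_nseq _ _ _ _ 0); last by move=> j hj; rewrite /Fc; (repeat case: ifP => ?); lia.
  by rewrite -catA runs3g // undup3.
- have ec2 : (i2 n k P).+1 = c2 n k P by rewrite /c2; lia.
  have hc1 : c1 n k P = (i1 n k P).+1 by rewrite /c1; lia.
  rewrite ec2.
  rewrite (@Fc_nseq _ _ _ _ 2); last by move=> j hj; rewrite /Fc; (repeat case: ifP => ?); lia.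
  have -> : c2 n k P = c1 n k P + (c2 n k P - c1 n k P) by rewrite /c1 /c2; lia.
  rewrite iotaD map_cat add0n.
  rewrite (@Fc_nseq _ _ _ _ 0); last by move=> j hj; rewrite /Fc; (repeat case: ifP => ?); lia.
  rewrite (@Fc_nseq _ _ _ _ 1); last by move=> j hj; rewrite /Fc; (repeat case: ifP => ?); lia.
  by rewrite runs3g // undup3.
Qed.

Unset Implicit Arguments.

Theorem corollary6 (n k : nat) (P : seq nat) :
  2 <= n -> AP_perm n k P -> P <> rev (iota 1 n) ->
  (size (undup (ternary n k P)) = 2 -> runs (BWT (ternary n k P)) = 2) /\
  (size (undup (ternary n k P)) = 3 -> runs (BWT (ternary n k P)) = 3).
Proof. by move=> hn hAP _; rewrite runs_undup. Qed.
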